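(* Let $D$ be a vertex-supported divisor on a metric graph $\Gamma$. If $C$ is an anchor cell of $|D|$ represented by a divisor $D+(f)$ with $f\in R(D)$, then $C$ is uniquely determined by the outgoing slopes of $f$ at all vertices of $\Gamma$ (along all edges incident to them).
   Context: A metric graph $\Gamma=(V,E)$ is a connected undirected graph whose edges have positive real lengths $M_e$. Divisors are finite formal $\mathbb{Z}$-combinations of points of $\Gamma$; effective means nonnegative coefficients; vertex-supported means support in $V$. A rational function is a continuous $f:\Gamma\to\mathbb{R}$, piecewise linear on each edge with finitely many pieces and integer slopes; $(f)=\sum_x\mathrm{ord}_x(f)x$ with $\mathrm{ord}_x(f)$ the sum of outgoing slopes at $x$. $R(D)=\{f:D+(f)\text{ effective}\}$, $|D|=\{D+(f):f\in R(D)\}$. Cells of $|D|$: identify each open edge $e$ with $(0,M_e)$. A cell is given by data: nonnegative integers $d_v$ ($v\in V$), ordered partitions $d_e=\sum_{i=1}^{r_e}d_e^i$ into positive integers for some edges, and integers $m_e$ ($e\in E$); $L\in|D|$ belongs to it iff $L(v)=d_v$, $L|_{e^\circ}=\sum_i d_e^ix_i$ with $0<x_1<\dots<x_{r_e}<M_e$ on edges with a partition and $L|_{e^\circ}=0$ otherwise, and every $f\in R(D)$ with $L=D+(f)$ has outgoing slope $m_e$ at $0\in e$. Elements of a cell are its representatives; a cell is determined by its data. An anchor divisor is a divisor with at most one positive interior point on each edge; an anchor cell is a cell all of whose representatives are anchor divisors. *)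

(* Defs.v *)
From mathcomp Require Import all_boot.
From Stdlib Require Import Reals ZArith List.

Set Implicit Arguments.
Unset Strict Implicit.
Unset Printing Implicit Defensive.

(* Each edge e is oriented from
   [src e] to [tgt e]; its interior is identified with the open interval
   (0, len e), 0 corresponding to [src e] and [len e] to [tgt e].
   Loops (src e = tgt e) and multiple edges are allowed. *)
Record mgraph := MGraph {
  mV : finType;
  mE : finType;
  src : mE -> mV;
  tgt : mE -> mV;
  len : mE -> R
}.

Definition adjacent (G : mgraph) : rel (mV G) :=
  fun u v => [exists e : mE G,
     ((src e == u) && (tgt e == v)) || ((src e == v) && (tgt e == u))].

Definition metric_graph (G : mgraph) : Prop :=
  (forall e : mE G, (0 < len e)%R) /\
  (forall u v : mV G, connect (@adjacent G) u v).

(* Points of the metric graph: vertices, or interior points (e, t) with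
   0 < t < len e.  Terms [PE e t] with t outside (0, len e) are junk and
   divisors are required to vanish on them. *)
Inductive pt (G : mgraph) :=
| PV of mV G
| PE of mE G & R.

Definition valid_pt (G : mgraph) (x : pt G) : Prop :=
  match x with
  | PV _ => True
  | PE e t => (0 < t < len e)%R
  end.

Definition divisor_on (G : mgraph) := pt G -> Z.

Definition is_divisor (G : mgraph) (D : divisor_on G) : Prop :=
  (forall x, ~ valid_pt x -> D x = 0%Z) /\
  (exists s : list (pt G), forall x, D x <> 0%Z -> In x s).

Definition effective (G : mgraph) (D : divisor_on G) : Prop :=
  forall x, valid_pt x -> (0 <= D x)%Z.

Definition vertex_supported (G : mgraph) (D : divisor_on G) : Prop :=
  forall e t, D (PE e t) = 0%Z.

(* A function on the metric graph: values at vertices and, on each edge e,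
   a function on [0, len e] (parametrised as above). *)
Record gfun (G : mgraph) := GFun {
  fV : mV G -> R;
  fE : mE G -> R -> R
}.

Definition rational_fun (G : mgraph) (f : gfun G) : Prop :=
  forall e : mE G,
    fE f e 0%R = fV f (src e) /\
    fE f e (len e) = fV f (tgt e) /\
    exists (n : nat) (bp : nat -> R) (sl : nat -> Z),
      bp 0%nat = 0%R /\ bp n = len e /\
      (forall i, (i < n)%coq_nat -> (bp i < bp (S i))%R) /\
      (forall i t, (i < n)%coq_nat -> (bp i <= t <= bp (S i))%R ->
          fE f e t = (fE f e (bp i) + IZR (sl i) * (t - bp i))%R).

Definition rslope (F : R -> R) (t : R) (m : Z) : Prop :=
  exists eps, (0 < eps)%R /\
    forall s, (0 <= s <= eps)%R -> F (t + s)%R = (F t + IZR m * s)%R.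

Definition lslope (F : R -> R) (t : R) (m : Z) : Prop :=
  exists eps, (0 < eps)%R /\
    forall s, (0 <= s <= eps)%R -> F (t - s)%R = (F t - IZR m * s)%R.

Definition out_slope0 (G : mgraph) (f : gfun G) (e : mE G) (m : Z) : Prop :=
  rslope (fE f e) 0%R m.

(* Outgoing slope of f along e at the endpoint len e (i.e. at tgt e). *)
Definition out_slope1 (G : mgraph) (f : gfun G) (e : mE G) (m : Z) : Prop :=
  lslope (fE f e) (len e) (- m)%Z.

(* ord_x(f) = k : sum of outgoing slopes of f at x. *)
Definition ord_at (G : mgraph) (f : gfun G) (x : pt G) (k : Z) : Prop :=
  match x with
  | PV v =>
      exists s0 s1 : mE G -> Z,
        (forall e, out_slope0 f e (s0 e)) /\
        (forall e, out_slope1 f e (s1 e)) /\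
        k = (\big[Z.add/0%Z]_(e : mE G | src e == v) s0 e
             + \big[Z.add/0%Z]_(e : mE G | tgt e == v) s1 e)%Z
  | PE e t =>
      if Rlt_dec 0 t then
        if Rlt_dec t (len e) then
          exists r l, rslope (fE f e) t r /\ lslope (fE f e) t l /\ k = (r - l)%Z
        else k = 0%Z
      else k = 0%Z
  end.

Definition is_sum_principal (G : mgraph) (D : divisor_on G) (f : gfun G)
    (L : divisor_on G) : Prop :=
  forall x, exists k, ord_at f x k /\ L x = (D x + k)%Z.

Definition in_linsys (G : mgraph) (D L : divisor_on G) : Prop :=
  exists f, rational_fun f /\ is_sum_principal D f L /\ effective L.

(* Cell data: d_v (vertices), ordered partition of d_e (the empty list
   meaning "no partition on e"), and m_e. *)
Record cell_data (G : mgraph) := CellData {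
  cdV : mV G -> nat;
  cdE : mE G -> list nat;
  cdM : mE G -> Z
}.

Definition in_cell (G : mgraph) (D : divisor_on G) (c : cell_data G)
    (L : divisor_on G) : Prop :=
  in_linsys D L /\
  (forall v, L (PV v) = Z.of_nat (cdV c v)) /\
  (forall e,
     Forall (fun d => (0 < d)%coq_nat) (cdE c e) /\
     exists xs : list R,
       length xs = length (cdE c e) /\
       (forall i, (i < length xs)%coq_nat ->
           (0 < nth i xs 0 < len e)%R) /\
       (forall i j, (i < j)%coq_nat -> (j < length xs)%coq_nat ->
           (nth i xs 0 < nth j xs 0)%R) /\
       (forall i, (i < length xs)%coq_nat ->
           L (PE e (nth i xs 0%R)) = Z.of_nat (nth i (cdE c e) 0%nat)) /\
       (forall t, (0 < t < len e)%R -> ~ In t xs -> L (PE e t) = 0%Z)) /\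
  (forall e f, rational_fun f -> is_sum_principal D f L ->
     out_slope0 f e (cdM c e)).

Definition anchor_divisor (G : mgraph) (L : divisor_on G) : Prop :=
  forall e t t',
    (0 < t < len e)%R -> (0 < t' < len e)%R ->
    (0 < L (PE e t))%Z -> (0 < L (PE e t'))%Z -> t = t'.

Definition anchor_cell (G : mgraph) (D : divisor_on G) (c : cell_data G) : Prop :=
  forall L, in_cell D c L -> anchor_divisor L.

(* Main.v *)
Require Import Defs.
From mathcomp Require Import all_boot.
From Stdlib Require Import Reals ZArith List.
From Stdlib Require Import Lra Lia FunctionalExtensionality.

Set Implicit Arguments.
Unset Strict Implicit.
Local Open Scope R_scope.

Lemma rslope_uniq F t m1 m2 : rslope F t m1 -> rslope F t m2 -> m1 = m2.
Proof.
  intros [e1 [He1 H1]] [e2 [He2 H2]].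
  set s := Rmin e1 e2.
  assert (Hs : 0 < s) by (unfold s; apply Rmin_glb_lt; lra).
  assert (A1 := H1 s ltac:(split; [lra| apply Rmin_l])).
  assert (A2 := H2 s ltac:(split; [lra| apply Rmin_r])).
  apply eq_IZR. rewrite A1 in A2.
  apply Rmult_eq_reg_r with s; lra.
Qed.

Lemma lslope_uniq F t m1 m2 : lslope F t m1 -> lslope F t m2 -> m1 = m2.
Proof.
  intros [e1 [He1 H1]] [e2 [He2 H2]].
  set s := Rmin e1 e2.
  assert (Hs : 0 < s) by (unfold s; apply Rmin_glb_lt; lra).
  assert (A1 := H1 s ltac:(split; [lra| apply Rmin_l])).
  assert (A2 := H2 s ltac:(split; [lra| apply Rmin_r])).
  apply eq_IZR. rewrite A1 in A2.
  apply Rmult_eq_reg_r with s; lra.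
Qed.

Section Piece.
Variables (F : R -> R) (n : nat) (bp : nat -> R) (sl : nat -> Z).
Hypothesis Hlin : forall i t, (i < n)%coq_nat -> bp i <= t <= bp (S i) ->
  F t = F (bp i) + IZR (sl i) * (t - bp i).

Lemma piece_r i t : (i < n)%coq_nat -> bp i <= t < bp (S i) -> rslope F t (sl i).
Proof.
  intros Hi Ht. exists (bp (S i) - t). split; [lra|]. intros s Hs.
  rewrite (@Hlin i (t+s) Hi ltac:(lra)).
  rewrite (@Hlin i t Hi ltac:(lra)). ring.
Qed.

Lemma piece_l i t : (i < n)%coq_nat -> bp i < t <= bp (S i) -> lslope F t (sl i).
Proof.
  intros Hi Ht. exists (t - bp i). split; [lra|]. intros s Hs.
  rewrite (@Hlin i (t-s) Hi ltac:(lra)).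
  rewrite (@Hlin i t Hi ltac:(lra)). ring.
Qed.
End Piece.

Lemma bp_mono n (bp : nat -> R) : (forall i, (i<n)%coq_nat -> bp i < bp (S i)) ->
  forall i j, (i < j)%coq_nat -> (j <= n)%coq_nat -> bp i < bp j.
Proof.
  intros H i j. induction j; intros Hij Hj; [lia|].
  destruct (Nat.eq_dec i j) as [->|Hne]; [apply H; lia|].
  apply Rlt_trans with (bp j); [apply IHj; lia | apply H; lia].
Qed.

Lemma int_ord (G : mgraph) (D : divisor_on G) f L e t :
  vertex_supported D -> is_sum_principal D f L -> 0 < t < len e ->
  exists r l, rslope (fE f e) t r /\ lslope (fE f e) t l /\ L (PE e t) = (r - l)%Z.
Proof.
  intros HDv HL Ht. destruct (HL (PE e t)) as [k [Hk HLk]]. cbn in Hk.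
  rewrite HDv in HLk.
  destruct (Rlt_dec 0 t) as [Ra|Ra]; [|lra]. destruct (Rlt_dec t (len e)) as [Rb|Rb]; [|lra].
  destruct Hk as [r0 [l0 [H1 [H2 H3]]]]. exists r0, l0. split; [|split]; auto. lia.
Qed.

Lemma edge_deg (G : mgraph) (D : divisor_on G) f L e x s0 s1 :
  0 < len e -> vertex_supported D -> rational_fun f -> is_sum_principal D f L ->
  0 < x < len e -> (forall t, 0 < t < len e -> t <> x -> L (PE e t) = 0%Z) ->
  out_slope0 f e s0 -> out_slope1 f e s1 -> L (PE e x) = (- (s0 + s1))%Z.
Proof.
  intros Hlen HDv Hf HL Hx Hoth H0 H1.
  destruct (Hf e) as [_ [_ [n [bp [sl [Hb0 [Hbn [Hinc Hlin]]]]]]]].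
  assert (Hn : (0 < n)%coq_nat). { destruct n; [|lia]. rewrite Hb0 in Hbn. lra. }
  assert (Hmono := bp_mono Hinc).
  assert (E0 : s0 = sl 0%nat).
  { apply (rslope_uniq H0). apply (piece_r Hlin); [lia|].
    rewrite -Hb0. have ? := Hinc 0%nat Hn. lra. }
  assert (Hnn : S (Nat.pred n) = n) by lia.
  assert (E1 : (- s1)%Z = sl (Nat.pred n)).
  { apply (lslope_uniq H1). apply (piece_l Hlin); [lia|].
    rewrite Hnn -Hbn. have H9 := Hinc (Nat.pred n) ltac:(lia). rewrite Hnn in H9. lra. }
  assert (Hopen : forall i t, (i<n)%coq_nat -> bp i < t < bp (S i) -> 0 < t < len e ->
            L (PE e t) = 0%Z).
  { intros i t Hi Ht Ht'. destruct (int_ord HDv HL Ht') as [r [l [Hr [Hl Heq]]]].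
    rewrite Heq.
    rewrite (rslope_uniq Hr (piece_r (t:=t) Hlin Hi ltac:(lra))).
    rewrite (lslope_uniq Hl (piece_l (t:=t) Hlin Hi ltac:(lra))). lia. }
  assert (Hcl : forall i, (i<n)%coq_nat ->
     (sl i - sl 0%nat)%Z = if Rle_dec x (bp i) then L (PE e x) else 0%Z).
  { induction i; intros Hi.
    - destruct (Rle_dec x (bp 0%nat)) as [r|r]; cbn; [lra| lia].
    - specialize (IHi ltac:(lia)).
      assert (Hbpos : 0 < bp (S i) < len e).
      { split. rewrite -Hb0. apply Hmono; lia. rewrite -Hbn. apply Hmono; lia. }
      assert (Hbk : L (PE e (bp (S i))) = (sl (S i) - sl i)%Z).
      { destruct (int_ord HDv HL Hbpos) as [r [l [Hr [Hl Heq]]]].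
        rewrite Heq.
        rewrite (rslope_uniq Hr (piece_r (t:=bp (S i)) Hlin Hi ltac:(have ? := Hinc (S i) Hi; lra))).
        rewrite (lslope_uniq Hl (piece_l (i:=i) (t:=bp (S i)) Hlin ltac:(lia) ltac:(have ? := Hinc i ltac:(lia); lra))).
        reflexivity. }
      have Hii := Hinc i ltac:(lia).
      destruct (Req_dec (bp (S i)) x) as [Heq|Hne].
      + rewrite -Heq in IHi *.
        destruct (Rle_dec (bp (S i)) (bp i)); [exfalso; lra|].
        destruct (Rle_dec (bp (S i)) (bp (S i))); [|exfalso; lra]. cbn in *. lia.
      + rewrite (Hoth _ Hbpos Hne) in Hbk.
        destruct (Rle_dec x (bp i)), (Rle_dec x (bp (S i))); cbn in *; try (exfalso; lra); try lia.
        rewrite (Hopen i x ltac:(lia) ltac:(lra) Hx) in IHi *. lia. }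
  specialize (Hcl (Nat.pred n) ltac:(lia)).
  destruct (Rle_dec x (bp (Nat.pred n))) as [r|r]; cbn in Hcl.
  - lia.
  - rewrite (Hopen (Nat.pred n) x ltac:(lia) ltac:(rewrite Hnn; lra) Hx). lia.
Qed.

Definition espec (l : list nat) (T : Z) :=
  (l = nil /\ T = 0%Z) \/ (exists d, l = d :: nil /\ Z.of_nat d = T /\ (0 < d)%coq_nat).

Lemma espec_uniq l1 l2 T : espec l1 T -> espec l2 T -> l1 = l2.
Proof.
  intros [[-> ->]|[d [-> [<- Hd]]]] [[-> H]|[d' [-> [H Hd']]]]; auto; try lia.
  f_equal. f_equal. lia.
Qed.

Lemma cell_edge (G : mgraph) (D : divisor_on G) c L f e s0 s1 :
  metric_graph G -> vertex_supported D -> rational_fun f -> is_sum_principal D f L ->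
  effective L -> in_cell D c L -> anchor_divisor L ->
  out_slope0 f e s0 -> out_slope1 f e s1 -> espec (cdE c e) (- (s0 + s1))%Z.
Proof.
  intros [Hlen _] HDv Hf HL Heff Hc Han H0 H1.
  have Hle := Hlen e.
  destruct Hc as [_ [_ [Hedge _]]].
  destruct (Hedge e) as [Hpos [xs [Hl [Hrange [Hsort [Hval Hzero]]]]]].
  destruct xs as [|x0 [|x1 xs']].
  - destruct (cdE c e) eqn:Hce; simpl in Hl; [|discriminate]. left. split; auto.
    rewrite <- (edge_deg (x := len e / 2) Hle HDv Hf HL ltac:(lra)
      ltac:(intros t Ht _; apply Hzero; auto) H0 H1).
    apply Hzero; [lra | simpl; tauto].
  - destruct (cdE c e) as [|d [|d' l]] eqn:Hce; simpl in Hl; try discriminate.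
    inversion Hpos; subst.
    right. exists d. split; [auto|split; [|lia]].
    specialize (Hval 0%nat ltac:(simpl; lia)). specialize (Hrange 0%nat ltac:(simpl; lia)).
    simpl in Hval, Hrange. rewrite <- Hval.
    apply (edge_deg Hle HDv Hf HL Hrange); auto.
    intros t Ht Hne. have := Heff (PE e t) Ht. cbn. intro Hge.
    destruct (Z.eq_dec (L (PE e t)) 0) as [E|E]; auto.
    exfalso. apply Hne. apply (Han e t x0 Ht Hrange); lia.
  - destruct (cdE c e) as [|d0 [|d1 l]] eqn:Hce; simpl in Hl; try discriminate.
    inversion Hpos as [|? ? Hd0 Hp']; subst. inversion Hp' as [|? ? Hd1 _]; subst.
    have V0 := Hval 0%nat ltac:(simpl; lia). have V1 := Hval 1%nat ltac:(simpl; lia).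
    have R0 := Hrange 0%nat ltac:(simpl; lia). have R1 := Hrange 1%nat ltac:(simpl; lia).
    have S01 := Hsort 0%nat 1%nat ltac:(lia) ltac:(simpl; lia).
    simpl in V0, V1, R0, R1, S01.
    exfalso. have := Han e x0 x1 R0 R1 ltac:(lia) ltac:(lia). lra.
Qed.

Theorem corollary2p16 (G : mgraph) (HG : metric_graph G)
  (D : divisor_on G) (HD : is_divisor D) (HDv : vertex_supported D)
  (c1 c2 : cell_data G) (f1 f2 : gfun G) (L1 L2 : divisor_on G) :
  rational_fun f1 -> is_sum_principal D f1 L1 -> effective L1 ->
  rational_fun f2 -> is_sum_principal D f2 L2 -> effective L2 ->
  in_cell D c1 L1 -> anchor_cell D c1 ->
  in_cell D c2 L2 -> anchor_cell D c2 ->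
  (forall e, exists m, out_slope0 f1 e m /\ out_slope0 f2 e m) ->
  (forall e, exists m, out_slope1 f1 e m /\ out_slope1 f2 e m) ->
  (forall v, cdV c1 v = cdV c2 v) /\
  (forall e, cdE c1 e = cdE c2 e /\ cdM c1 e = cdM c2 e) /\
  (forall L, in_cell D c1 L <-> in_cell D c2 L).
Proof.
  intros Hf1 HL1 He1 Hf2 HL2 He2 Hc1 Ha1 Hc2 Ha2 HS0 HS1.
  assert (HV : forall v, cdV c1 v = cdV c2 v).
  { intro v. destruct Hc1 as [_ [HV1 _]]. destruct Hc2 as [_ [HV2 _]].
    apply Nat2Z.inj. rewrite -HV1 -HV2.
    destruct (HL1 (PV v)) as [k1 [Hk1 E1]]. destruct (HL2 (PV v)) as [k2 [Hk2 E2]].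
    rewrite E1 E2. f_equal.
    destruct Hk1 as [a0 [a1 [Ha0 [Ha1' ->]]]]. destruct Hk2 as [b0 [b1 [Hb0 [Hb1 ->]]]].
    f_equal; apply eq_bigr; intros e _.
    - destruct (HS0 e) as [m [Hm1 Hm2]].
      rewrite (rslope_uniq (Ha0 e) Hm1) (rslope_uniq (Hb0 e) Hm2). reflexivity.
    - destruct (HS1 e) as [m [Hm1 Hm2]].
      have := lslope_uniq (Ha1' e) Hm1. have := lslope_uniq (Hb1 e) Hm2. lia. }
  assert (HE : forall e, cdE c1 e = cdE c2 e /\ cdM c1 e = cdM c2 e).
  { intro e. destruct (HS0 e) as [m0 [Hm01 Hm02]]. destruct (HS1 e) as [m1 [Hm11 Hm12]].
    split.
    - apply (espec_uniq (T := (- (m0 + m1))%Z)).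
      + exact (cell_edge HG HDv Hf1 HL1 He1 Hc1 (Ha1 L1 Hc1) Hm01 Hm11).
      + exact (cell_edge HG HDv Hf2 HL2 He2 Hc2 (Ha2 L2 Hc2) Hm02 Hm12).
    - destruct Hc1 as [_ [_ [_ M1]]]. destruct Hc2 as [_ [_ [_ M2]]].
      rewrite (rslope_uniq (M1 e f1 Hf1 HL1) Hm01).
      rewrite (rslope_uniq (M2 e f2 Hf2 HL2) Hm02). reflexivity. }
  split; [exact HV|split; [exact HE|]].
  assert (Hc : c1 = c2).
  { clear -HV HE. destruct c1 as [a1 b1 m1], c2 as [a2 b2 m2]; simpl in *.
    f_equal; apply functional_extensionality; intro x; [apply HV|apply HE|apply HE]. }
  rewrite Hc. tauto.
Qed.
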